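(* Let $s,t$ be processes, $\mathcal{Z}_s\in\mathrm{res}(s)$ with initial state $z_s$ and $\mathcal{Z}_t\in\mathrm{res}(t)$ with initial state $z_t$. Then $\Psi_{\mathcal{Z}_s}\equiv^\dagger\Psi_{\mathcal{Z}_t}$ if and only if $\Pr(\mathcal{C}^{\mathrm{w}}(z_s,\alpha))=\Pr(\mathcal{C}^{\mathrm{w}}(z_t,\alpha))$ for all $\alpha\in A^\star$.
   Context: PTS $(\mathcal{S},A_\tau,\to)$ with $A_\tau=A\cup\{\tau\}$, $\tau$ the silent action, finitely supported distributions; processes image-finite and finite. Computations $c=s_0\xrightarrow{a_1}\cdots\xrightarrow{a_n}s_n$ via transitions $s_{i-1}\xrightarrow{a_i}\pi_i$, $s_i\in\mathrm{supp}(\pi_i)$; $\Pr(c)=\prod\pi_i(s_i)$ (empty: 1); $\mathrm{tr}(c)=a_1\cdots a_n\in A_\tau^\star$; maximal = not a proper prefix of another computation from the same process; $\mathcal{C}_{\max}(z,\alpha)=\{c\in\mathcal{C}_{\max}(z):\mathrm{tr}(c)=\alpha\}$; $\Pr$ of a set is the sum. A resolution of $s$ is a PTS $\mathcal{Z}=(Z,A_\tau,\to_{\mathcal{Z}})$ with $\mathrm{corr}\colon Z\to\mathcal{S}$ and initial state $z_s$, $\mathrm{corr}(z_s)=s$, such that $z_s$ is in no target support, every other state is in the support of a target of a transition from a different state, every $z\xrightarrow{a}_{\mathcal{Z}}\pi$ is matched by $\mathrm{corr}(z)\xrightarrow{a}\pi'$ with $\pi(z')=\pi'(\mathrm{corr}(z'))$,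 and each state has at most one outgoing transition. Traces are equivalent, $\alpha\equiv\beta$, iff they coincide after deleting all $\tau$'s. For $\alpha\in A^\star$, $\mathcal{C}^{\mathrm{w}}(z,\alpha)$ is the set of computations $c$ from $z$ with $\mathrm{tr}(c)\equiv\alpha$ that are not proper prefixes of another computation $c'$ from $z$ with $\mathrm{tr}(c')\equiv\alpha$. Trace formulae $\Phi::=\top\mid\langle a\rangle\Phi$, $a\in A_\tau$; tracing formula $\Phi_\varepsilon=\top$, $\Phi_{a\alpha}=\langle a\rangle\Phi_\alpha$; $\Phi_\alpha\equiv\Phi_\beta$ iff $\alpha\equiv\beta$. Trace distribution formulae $\bigoplus_{i\in I}r_i\Phi_i$ ($I$ finite nonempty, $\Phi_i$ pairwise distinct, $r_i\in(0,1]$, $\sum r_i=1$) are viewed as distributions on trace formulae; $\Psi_1\equiv^\dagger\Psi_2$ iff they assign the same total probability to every $\equiv$-class. Mimicking formula: $\Psi_{\mathcal{Z}}=\bigoplus_{\alpha\in\mathrm{tr}(\mathcal{C}_{\max}(z))}\Pr(\mathcal{C}_{\max}(z,\alpha))\Phi_\alpha$. *)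

(* Defs.v *)
From Stdlib Require Import Reals List Classical ClassicalEpsilon.
Import ListNotations.
Open Scope R_scope.
Set Implicit Arguments.

Definition Atau (A : Type) := option A.
Definition tau {A : Type} : Atau A := None.

Definition lsum {T : Type} (f : T -> R) (l : list T) : R :=
  fold_right (fun x acc => f x + acc) 0 l.

(** Sum of f over a (finite) set P; the value is the sum over any duplicate-free
    enumeration of P.  (If P is not finite, the value is 0 by convention;
    all sets used in the theorem are finite under its hypotheses.) *)
Definition fsum {T : Type} (P : T -> Prop) (f : T -> R) : R :=
  match excluded_middle_informative
          (exists l : list T, NoDup l /\ forall x, P x <-> In x l) with
  | left H => lsum f (proj1_sig (constructive_indefinite_description _ H))
  | right _ => 0
  end.

Definition is_dist {X : Type} (pi : X -> R) : Prop :=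
  (forall x, 0 <= pi x) /\
  exists l : list X, NoDup l /\ (forall x, pi x <> 0 -> In x l) /\ lsum pi l = 1.

Definition PTS_wf {A S : Type} (trans : S -> Atau A -> (S -> R) -> Prop) : Prop :=
  forall s a pi, trans s a pi -> is_dist pi.

Inductive reach {A S : Type} (trans : S -> Atau A -> (S -> R) -> Prop) : S -> S -> Prop :=
| reach_refl s : reach trans s s
| reach_step s a pi s' s'' :
    trans s a pi -> 0 < pi s' -> reach trans s' s'' -> reach trans s s''.

Definition image_finite_at {A S : Type} (trans : S -> Atau A -> (S -> R) -> Prop) (s : S) : Prop :=
  exists l : list (Atau A * (S -> R)), forall a pi, trans s a pi <-> In (a, pi) l.

Definition image_finite_proc {A S : Type} (trans : S -> Atau A -> (S -> R) -> Prop) (s : S) : Prop :=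
  forall s', reach trans s s' -> image_finite_at trans s'.

Definition finite_proc {A S : Type} (trans : S -> Atau A -> (S -> R) -> Prop) (s : S) : Prop :=
  ~ exists (f : nat -> S) (g : nat -> Atau A) (h : nat -> (S -> R)),
      f O = s /\ forall n, trans (f n) (g n) (h n) /\ 0 < h n (f (Datatypes.S n)).

(** A resolution is a PTS in which each state has at most one
    outgoing transition; we represent its transition relation by a partial
    function [rtr : Z -> option (Atau A * (Z -> R))]:  z -a->_Z pi  iff
    rtr z = Some (a, pi). *)
Definition res_trans {A Z : Type} (rtr : Z -> option (Atau A * (Z -> R)))
  : Z -> Atau A -> (Z -> R) -> Prop :=
  fun z a pi => rtr z = Some (a, pi).

Definition is_resolution {A S Z : Type} (trans : S -> Atau A -> (S -> R) -> Prop) (s : S)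
  (rtr : Z -> option (Atau A * (Z -> R))) (corr : Z -> S) (z0 : Z) : Prop :=
  PTS_wf (res_trans rtr) /\
  corr z0 = s /\
  (forall z a pi, res_trans rtr z a pi -> ~ 0 < pi z0) /\
  (forall z, z <> z0 ->
     exists z' a pi, z' <> z /\ res_trans rtr z' a pi /\ 0 < pi z) /\
  (forall z a pi, res_trans rtr z a pi ->
     exists pi', trans (corr z) a pi' /\ forall z', pi z' = pi' (corr z')).

(** Computations from z in a resolution: the sequence of pairs (a_i, z_i)
    of  z = z_0 -a_1-> z_1 ... -a_n-> z_n. *)
Fixpoint is_comp {A Z : Type} (rtr : Z -> option (Atau A * (Z -> R)))
  (z : Z) (c : list (Atau A * Z)) : Prop :=
  match c with
  | [] => True
  | (a, z') :: c' =>
      exists pi, rtr z = Some (a, pi) /\ 0 < pi z' /\ is_comp rtr z' c'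
  end.

Fixpoint comp_pr {A Z : Type} (rtr : Z -> option (Atau A * (Z -> R)))
  (z : Z) (c : list (Atau A * Z)) : R :=
  match c with
  | [] => 1
  | (_, z') :: c' =>
      match rtr z with
      | Some (_, pi) => pi z' * comp_pr rtr z' c'
      | None => 0
      end
  end.

Definition ctrace {A Z : Type} (c : list (Atau A * Z)) : list (Atau A) := map fst c.

Definition proper_prefix {T : Type} (c c' : list T) : Prop :=
  exists d, d <> [] /\ c' = c ++ d.

Definition is_max_comp {A Z : Type} (rtr : Z -> option (Atau A * (Z -> R)))
  (z : Z) (c : list (Atau A * Z)) : Prop :=
  is_comp rtr z c /\ ~ exists c', is_comp rtr z c' /\ proper_prefix c c'.

Definition PrSet {A Z : Type} (rtr : Z -> option (Atau A * (Z -> R))) (z : Z)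
  (P : list (Atau A * Z) -> Prop) : R :=
  fsum P (comp_pr rtr z).

Fixpoint erase {A : Type} (l : list (Atau A)) : list A :=
  match l with
  | [] => []
  | None :: l' => erase l'
  | Some a :: l' => a :: erase l'
  end.

Definition trace_equiv {A : Type} (al be : list (Atau A)) : Prop := erase al = erase be.

Definition Cw {A Z : Type} (rtr : Z -> option (Atau A * (Z -> R))) (z : Z) (alpha : list A)
  : list (Atau A * Z) -> Prop :=
  fun c => is_comp rtr z c /\ erase (ctrace c) = alpha /\
    ~ exists c', is_comp rtr z c' /\ erase (ctrace c') = alpha /\ proper_prefix c c'.

Inductive tform (A : Type) : Type :=
| TTop : tform A
| TDia : Atau A -> tform A -> tform A.
Arguments TTop {A}.

Fixpoint tracing {A : Type} (al : list (Atau A)) : tform A :=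
  match al with
  | [] => TTop
  | a :: al' => TDia a (tracing al')
  end.

Definition tf_equiv {A : Type} (f g : tform A) : Prop :=
  exists al be, f = tracing al /\ g = tracing be /\ trace_equiv al be.

(** Trace distribution formulae are viewed as (finitely supported)
    distributions on trace formulae: functions tform A -> R. *)
Definition class_pr {A : Type} (Psi : tform A -> R) (f : tform A) : R :=
  fsum (fun g => tf_equiv g f /\ Psi g <> 0) Psi.

Definition tdf_equiv {A : Type} (Psi1 Psi2 : tform A -> R) : Prop :=
  forall f, class_pr Psi1 f = class_pr Psi2 f.

(** Mimicking formula Psi_Z = (+)_{alpha in tr(C_max(z))} Pr(C_max(z,alpha)) Phi_alpha,
    as a distribution on trace formulae: the weight of Phi_alpha is
    Pr(C_max(z, alpha)) (which is 0 iff alpha is not in tr(C_max(z))). *)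
Definition mimic {A Z : Type} (rtr : Z -> option (Atau A * (Z -> R))) (z : Z)
  : tform A -> R :=
  fun f => PrSet rtr z (fun c => is_max_comp rtr z c /\ tracing (ctrace c) = f).

(* Main.v *)
Require Import Defs.
From Stdlib Require Import Reals List.
From Stdlib Require Import Lra Classical ClassicalEpsilon Permutation FinFun Lia.
Import ListNotations.
Open Scope R_scope.

Definition fin {T : Type} (P : T -> Prop) := exists l, NoDup l /\ forall x, P x <-> In x l.
Definition cov {T : Type} (P : T -> Prop) := exists l : list T, forall x, P x -> In x l.

Definition indf {T : Type} (P : T -> Prop) (f : T -> R) (x : T) : R :=
  if excluded_middle_informative (P x) then f x else 0.

Section Fin.
Context {T : Type}.

Lemma lsum_app (f : T -> R) l1 l2 : lsum f (l1 ++ l2) = lsum f l1 + lsum f l2.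
Proof. induction l1; simpl; [lra| rewrite IHl1; lra]. Qed.

Lemma lsum_perm (f : T -> R) l1 l2 : Permutation l1 l2 -> lsum f l1 = lsum f l2.
Proof. induction 1; simpl; lra. Qed.

Lemma lsum_ext (f g : T -> R) l : (forall x, In x l -> f x = g x) -> lsum f l = lsum g l.
Proof. induction l; simpl; intros H; auto. rewrite H, IHl; auto. Qed.

Lemma lsum_plus (f g : T -> R) l : lsum (fun x => f x + g x) l = lsum f l + lsum g l.
Proof. induction l; simpl; lra. Qed.

Lemma lsum_scal (f : T -> R) k l : lsum (fun x => k * f x) l = k * lsum f l.
Proof. induction l; simpl; lra. Qed.

Lemma lsum_zero (l : list T) : lsum (fun _ => 0) l = 0.
Proof. induction l; simpl; lra. Qed.

Lemma lsum_nonneg (f : T -> R) l : (forall x, In x l -> 0 <= f x) -> 0 <= lsum f l.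
Proof. induction l; simpl; intros H; [lra|]. assert (0 <= lsum f l) by auto.
  specialize (H a (or_introl eq_refl)). lra. Qed.

Lemma lsum_ge (f : T -> R) l x : (forall x, In x l -> 0 <= f x) -> In x l -> f x <= lsum f l.
Proof. induction l; simpl; intros H Hx; [tauto|]. destruct Hx as [<-|Hx].
  - assert (0 <= lsum f l) by (apply lsum_nonneg; auto). lra.
  - assert (f x <= lsum f l) by auto. assert (0 <= f a) by auto. lra. Qed.

Lemma fsum_eq P (f : T -> R) l : NoDup l -> (forall x, P x <-> In x l) -> fsum P f = lsum f l.
Proof.
  intros Hn Hl. unfold fsum.
  destruct (excluded_middle_informative _) as [H|H].
  - destruct (constructive_indefinite_description _ H) as [l' [Hn' Hl']]; simpl.
    apply lsum_perm. apply NoDup_Permutation; auto. intro x. rewrite <- Hl', Hl. tauto.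
  - exfalso; apply H; eauto.
Qed.

Lemma fsum_nfin P (f : T -> R) : ~ fin P -> fsum P f = 0.
Proof.
  intros H. unfold fsum. destruct (excluded_middle_informative _) as [H'|H']; auto.
  exfalso; apply H, H'.
Qed.

Lemma cov_fin (P : T -> Prop) : cov P -> fin P.
Proof.
  intros [l Hl]. revert P Hl. induction l as [|x l IH]; intros P Hl.
  - exists []. split; [constructor|]. intros y; split; [apply Hl|simpl; tauto].
  - destruct (IH (fun y => P y /\ y <> x)) as [l' [Hn Hl']].
    { intros y [Hy Hne]. destruct (Hl y Hy); [congruence|auto]. }
    destruct (classic (P x)) as [Px|nPx].
    + exists (x :: l'). split.
      * constructor; auto. intros Hin. apply Hl' in Hin. tauto.
      * intros y. simpl. rewrite <- Hl'. split.
        -- intros Py. destruct (classic (y = x)); [left; auto|right; auto].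
        -- intros [<-|[]]; auto.
    + exists l'. split; auto. intros y. rewrite <- Hl'. split; [|tauto].
      intros Py; split; auto. intros ->; tauto.
Qed.

Lemma cov_sub (P Q : T -> Prop) : cov Q -> (forall x, P x -> Q x) -> cov P.
Proof. intros [l Hl] H. exists l; auto. Qed.

Lemma cov_or (P Q : T -> Prop) : cov P -> cov Q -> cov (fun x => P x \/ Q x).
Proof. intros [l1 H1] [l2 H2]. exists (l1 ++ l2). intros x [H|H]; apply in_or_app; auto. Qed.

Lemma fsum_ext P Q (f g : T -> R) : (forall x, P x <-> Q x) -> (forall x, P x -> f x = g x) ->
  fsum P f = fsum Q g.
Proof.
  intros HPQ Hfg. destruct (classic (fin P)) as [[l [Hn Hl]]|HP].
  - rewrite (fsum_eq P f l), (fsum_eq Q g l); auto.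
    + apply lsum_ext. intros x Hx. apply Hfg, Hl, Hx.
    + intros x; rewrite <- HPQ; auto.
  - rewrite !fsum_nfin; auto. intros [l [Hn Hl]]. apply HP. exists l; split; auto.
    intros x; rewrite HPQ; auto.
Qed.

Lemma fsum_scal P (f : T -> R) k : fsum P (fun x => k * f x) = k * fsum P f.
Proof. unfold fsum. destruct (excluded_middle_informative _); [apply lsum_scal|lra]. Qed.

Lemma fsum_empty P (f : T -> R) : (forall x, ~ P x) -> fsum P f = 0.
Proof. intros H. rewrite (fsum_eq P f []); auto. constructor. intros x; simpl; split; [apply H|tauto]. Qed.

Lemma fsum_single P (f : T -> R) y : (forall x, P x <-> x = y) -> fsum P f = f y.
Proof. intros H. rewrite (fsum_eq P f [y]); simpl; try lra. repeat constructor; simpl; tauto.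
  intros x; rewrite H; simpl; split; [auto|intros [->|[]]; auto]. Qed.

Lemma fsum_union P Q (f : T -> R) : cov P -> cov Q -> (forall x, P x -> Q x -> False) ->
  fsum (fun x => P x \/ Q x) f = fsum P f + fsum Q f.
Proof.
  intros cP cQ Hd. destruct (cov_fin P cP) as [l1 [N1 H1]]. destruct (cov_fin Q cQ) as [l2 [N2 H2]].
  rewrite (fsum_eq P f l1), (fsum_eq Q f l2), (fsum_eq _ f (l1 ++ l2)); auto.
  - apply lsum_app.
  - apply NoDup_app; auto. intros a Ha Hb. apply (Hd a); [apply H1|apply H2]; auto.
  - intros x. rewrite in_app_iff, H1, H2. tauto.
Qed.

Lemma fsum_ge P (f : T -> R) x : cov P -> (forall x, P x -> 0 <= f x) -> P x -> f x <= fsum P f.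
Proof.
  intros cP Hp Px. destruct (cov_fin P cP) as [l [N H]]. rewrite (fsum_eq P f l); auto.
  apply lsum_ge; [intros y Hy; apply Hp, H; auto| apply H; auto].
Qed.

Lemma fsum_sub P (f : T -> R) l : NoDup l -> (forall x, P x -> In x l) ->
  fsum P f = lsum (indf P f) l.
Proof.
  revert P. induction l as [|x l IH]; intros P Hn Hl.
  - simpl. apply fsum_empty. intros y Py. apply (Hl y Py).
  - inversion Hn as [|? ? Hx Hn']; subst. simpl.
    assert (E : lsum (indf P f) l = lsum (indf (fun y => P y /\ y <> x) f) l).
    { apply lsum_ext. intros y Hy. unfold indf.
      destruct (excluded_middle_informative (P y)), (excluded_middle_informative (P y /\ y <> x)); auto.
      - exfalso. apply n. split; auto. intros ->; tauto.
      - tauto. }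
    rewrite E, <- IH; auto.
    2:{ intros y [Py Hne]. destruct (Hl y Py); [congruence|auto]. }
    unfold indf. destruct (excluded_middle_informative (P x)) as [Px|nPx].
    + rewrite <- (fsum_single (fun y => y = x) f x) by tauto.
      rewrite <- fsum_union.
      * apply fsum_ext; auto. intros y. split.
        -- intros Py. destruct (classic (y = x)); [left|right]; auto.
        -- intros [->|[]]; auto.
      * exists [x]. intros y ->; simpl; auto.
      * exists l. intros y [Py Hne]. destruct (Hl y Py); [congruence|auto].
      * intros y -> [_ H]; tauto.
    + rewrite Rplus_0_l. apply fsum_ext; auto. intros y; split; [|tauto].
      intros Py; split; auto. intros ->; tauto.
Qed.

Lemma lsum_ind_eq (l : list T) (y : T) (k : R) : NoDup l ->
  lsum (fun g => if excluded_middle_informative (y = g) then k else 0) l =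
  if excluded_middle_informative (In y l) then k else 0.
Proof.
  induction l as [|x l IH]; intros Hn; simpl.
  - destruct (excluded_middle_informative False); [tauto|reflexivity].
  - inversion Hn; subst. rewrite IH; auto.
    destruct (excluded_middle_informative (y = x)), (excluded_middle_informative (In y l)),
      (excluded_middle_informative (x = y \/ In y l)); subst; try lra; exfalso; intuition congruence.
Qed.

End Fin.

Lemma lsum_exch {X Y : Type} (F : X -> Y -> R) l1 l2 :
  lsum (fun x => lsum (fun y => F x y) l2) l1 = lsum (fun y => lsum (fun x => F x y) l1) l2.
Proof.
  induction l1; simpl.
  - rewrite lsum_zero; auto.
  - rewrite IHl1, <- lsum_plus. auto.
Qed.

Lemma fsum_image {X Y : Type} (P : X -> Prop) (h : X -> Y) (g : Y -> R) :
  Injective h -> cov P ->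
  fsum (fun y => exists x, P x /\ y = h x) g = fsum P (fun x => g (h x)).
Proof.
  intros Hi cP. destruct (cov_fin P cP) as [l [N H]].
  rewrite (fsum_eq P _ l), (fsum_eq _ g (map h l)); auto.
  - clear. induction l; simpl; auto. rewrite IHl; auto.
  - apply Injective_map_NoDup; auto.
  - intros y. rewrite in_map_iff. split.
    + intros [x [Px ->]]. exists x; split; auto. apply H; auto.
    + intros [x [<- Hx]]. exists x; split; auto. apply H; auto.
Qed.

Lemma fubini {X Y : Type} (M : X -> Prop) (h : X -> Y) (Pg : Y -> Prop) (f : X -> R) :
  cov M -> cov Pg ->
  fsum Pg (fun g => fsum (fun c => M c /\ h c = g) f) = fsum (fun c => M c /\ Pg (h c)) f.
Proof.
  intros cM cP. destruct (cov_fin M cM) as [lM [NM HM]]. destruct (cov_fin Pg cP) as [lP [NP HP]].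
  rewrite (fsum_eq Pg _ lP); auto.
  rewrite (fsum_sub _ f lM); auto. 2:{ intros c [Mc _]. apply HM; auto. }
  transitivity (lsum (fun g => lsum (fun c => if excluded_middle_informative (h c = g) then f c else 0) lM) lP).
  { apply lsum_ext. intros g Hg. rewrite (fsum_sub _ f lM); auto.
    2:{ intros c [Mc _]. apply HM; auto. }
    apply lsum_ext. intros c Hc. unfold indf.
    destruct (excluded_middle_informative (M c /\ h c = g)), (excluded_middle_informative (h c = g)); try tauto.
    exfalso; apply n; split; auto; apply HM; auto. }
  rewrite lsum_exch. apply lsum_ext. intros c Hc.
  rewrite (lsum_ind_eq lP (h c) (f c)); auto.
  - unfold indf. destruct (excluded_middle_informative (In (h c) lP)), (excluded_middle_informative (M c /\ Pg (h c))); auto.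
    + exfalso; apply n; split; [apply HM; auto| apply HP; auto].
    + exfalso; apply n; apply HP; tauto.
Qed.

Section Res.
Context {A Z : Type} (rtr : Z -> option (Atau A * (Z -> R))) (Hwf : PTS_wf (res_trans rtr)).

Definition stepR (z' z : Z) := exists a pi, rtr z = Some (a, pi) /\ 0 < pi z'.
Definition is_supp (pi : Z -> R) L := NoDup L /\ forall x, In x L <-> 0 < pi x.
Definition Wz z (al : list A) := PrSet rtr z (Cw rtr z al).
Definition Mx z (g : list A) c := is_max_comp rtr z c /\ erase (ctrace c) = g.
Definition Qz z (g : list A) := fsum (Mx z g) (comp_pr rtr z).

Lemma supp_exists (pi : Z -> R) : is_dist pi -> exists L, is_supp pi L.
Proof.
  intros [Hnn [l [_ [Hl _]]]].
  destruct (cov_fin (fun x => 0 < pi x)) as [L [N HL]].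
  { exists l. intros x Hx. apply Hl. lra. }
  exists L. split; auto. intros x; rewrite HL; tauto.
Qed.

Lemma supp_sum1 pi L : is_dist pi -> is_supp pi L -> lsum pi L = 1.
Proof.
  intros [Hnn [l [Nl [Hl Hs]]]] [N HL].
  rewrite <- (fsum_eq (fun x => 0 < pi x) pi L); auto. 2:{ intros x; rewrite HL; tauto. }
  rewrite (fsum_sub _ pi l); auto. 2:{ intros x Hx; apply Hl; lra. }
  rewrite <- Hs. apply lsum_ext. intros x _. unfold indf.
  destruct (excluded_middle_informative (0 < pi x)) as [|n]; auto. apply Rnot_lt_le in n. specialize (Hnn x). lra.
Qed.

Lemma dist_pos (pi : Z -> R) : is_dist pi -> exists x, 0 < pi x.
Proof.
  intros Hd. destruct (supp_exists pi Hd) as [L HL].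
  pose proof (supp_sum1 pi L Hd HL) as H. destruct L as [|x L].
  - simpl in H; lra.
  - exists x. apply HL. simpl; auto.
Qed.

Lemma rtr_dist z a pi : rtr z = Some (a, pi) -> is_dist pi.
Proof. intros H. apply (Hwf z a pi). exact H. Qed.

Lemma comp_pr_pos z c : is_comp rtr z c -> 0 < comp_pr rtr z c.
Proof.
  revert z. induction c as [|[a z'] c IH]; intros z Hc; simpl in *; [lra|].
  destruct Hc as [pi [H1 [H2 H3]]]. rewrite H1. specialize (IH _ H3). nra.
Qed.

Lemma comp_pr_cons z a pi b z' c : rtr z = Some (a, pi) ->
  comp_pr rtr z ((b, z') :: c) = pi z' * comp_pr rtr z' c.
Proof. intros H; simpl; rewrite H; auto. Qed.

Lemma cov_cons_union (a : Atau A) (L : list Z) (Pz : Z -> list (Atau A * Z) -> Prop) :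
  (forall z', In z' L -> cov (Pz z')) ->
  cov (fun c => exists z' c', c = (a, z') :: c' /\ In z' L /\ Pz z' c').
Proof.
  induction L as [|x L IH]; intros H.
  - exists []. intros c [z' [c' [_ [[] _]]]].
  - destruct IH as [l Hl]. { intros; apply H; simpl; auto. }
    destruct (H x (or_introl eq_refl)) as [l0 H0].
    exists (map (fun c' => (a, x) :: c') l0 ++ l). intros c [z' [c' [-> [[<-|Hin] Hp]]]];
    apply in_or_app.
    + left. apply in_map; auto.
    + right. apply Hl. exists z', c'; auto.
Qed.

Lemma comps_cov z : Acc stepR z -> cov (is_comp rtr z).
Proof.
  induction 1 as [z _ IH].
  destruct (rtr z) as [[a pi]|] eqn:E.
  - destruct (supp_exists pi (rtr_dist _ _ _ E)) as [L [N HL]].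
    destruct (cov_cons_union a L (fun z' => is_comp rtr z')) as [l Hl].
    { intros z' Hz. apply IH. exists a, pi; split; auto. apply HL; auto. }
    exists ([] :: l). intros [|[b z'] c] Hc; simpl; auto. right. apply Hl.
    simpl in Hc. destruct Hc as [pi' [E' [Hp Hc]]]. rewrite E in E'. injection E' as -> ->.
    exists z', c. repeat split; auto. apply HL; auto.
  - exists [[]]. intros [|[b z'] c] Hc; simpl; auto. simpl in Hc.
    destruct Hc as [pi' [E' _]]. congruence.
Qed.

Lemma fsum_cons_gen (a : Atau A) (L : list Z) (Pz : Z -> list (Atau A * Z) -> Prop) f :
  NoDup L -> (forall z', In z' L -> cov (Pz z')) ->
  fsum (fun c => exists z' c', c = (a, z') :: c' /\ In z' L /\ Pz z' c') f =
  lsum (fun z' => fsum (Pz z') (fun c' => f ((a, z') :: c'))) L.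
Proof.
  induction L as [|x L IH]; intros N Hc; simpl.
  - apply fsum_empty. intros c [z' [c' [_ [[] _]]]].
  - inversion N; subst.
    rewrite <- IH; auto. 2:{ intros; apply Hc; simpl; auto. }
    rewrite <- (fsum_image (Pz x) (fun c' => (a, x) :: c') f).
    + rewrite <- fsum_union.
      * apply fsum_ext; auto. intros c. split.
        -- intros [z' [c' [-> [[<-|Hin] Hp]]]]; [left|right]; eauto 10.
        -- intros [[c' [Hp ->]]|[z' [c' [-> [Hin Hp]]]]]; eauto 10.
      * destruct (Hc x (or_introl eq_refl)) as [l0 H0]. exists (map (fun c' => (a, x) :: c') l0).
        intros c [c' [Hp ->]]. apply in_map; auto.
      * apply cov_cons_union. intros; apply Hc; simpl; auto.
      * intros c [c' [_ ->]] [z' [c'' [E [Hin _]]]]. injection E as -> _. tauto.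
    + intros c1 c2 E. injection E; auto.
    + apply Hc; simpl; auto.
Qed.

Lemma fsum_decomp z a0 pi a L (Pz : Z -> list (Atau A * Z) -> Prop) (P : list (Atau A * Z) -> Prop) :
  Acc stepR z -> rtr z = Some (a0, pi) -> is_supp pi L ->
  (forall z' c, Pz z' c -> is_comp rtr z' c) ->
  (forall c, P c <-> exists z' c', c = (a, z') :: c' /\ 0 < pi z' /\ Pz z' c') ->
  fsum P (comp_pr rtr z) = lsum (fun z' => pi z' * fsum (Pz z') (comp_pr rtr z')) L.
Proof.
  intros Hacc E [N HL] Hpc HP.
  rewrite (fsum_ext P (fun c => exists z' c', c = (a, z') :: c' /\ In z' L /\ Pz z' c')
       _ (comp_pr rtr z)).
  - rewrite fsum_cons_gen; auto.
    + apply lsum_ext. intros z' Hz. rewrite <- fsum_scal. apply fsum_ext; [tauto|].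
      intros c _. apply (comp_pr_cons _ _ _ _ _ _ E).
    + intros z' Hz. apply (cov_sub _ (is_comp rtr z')); auto.
      apply comps_cov. apply (Acc_inv Hacc). exists a0, pi; split; auto. apply HL; auto.
  - intros c. rewrite HP. split; intros [z' [c' [H1 [H2 H3]]]]; exists z', c'; repeat split; auto;
      apply HL; auto.
  - auto.
Qed.


Lemma erase_cons (a : Atau A) l : erase (a :: l) = erase [a] ++ erase l.
Proof. destruct a; reflexivity. Qed.

Lemma erase_app (l1 l2 : list (Atau A)) : erase (l1 ++ l2) = erase l1 ++ erase l2.
Proof. induction l1 as [|a l1 IH]; simpl; auto. destruct a; simpl; rewrite IH; auto. Qed.

Lemma comp_cons_gen z al a1 z' c' : is_comp rtr z ((a1, z') :: c') -> erase (ctrace ((a1, z') :: c')) = al ->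
  exists pi, rtr z = Some (a1, pi) /\ exists be, al = erase [a1] ++ be /\ erase (ctrace c') = be.
Proof.
  intros [pi [E _]] He. exists pi; split; auto. exists (erase (ctrace c')). split; auto.
  rewrite <- He. unfold ctrace. simpl map. apply erase_cons.
Qed.

Lemma Cw_cons_iff z a0 pi al be a1 z' c' : rtr z = Some (a0, pi) -> erase [a0] ++ be = al ->
  (Cw rtr z al ((a1, z') :: c') <-> a1 = a0 /\ 0 < pi z' /\ Cw rtr z' be c').
Proof.
  intros E Hal. unfold Cw. split.
  - intros [[pi1 [E1 [Hp Hc]]] [He Hn]]. rewrite E in E1. injection E1 as <- <-.
    unfold ctrace in He. simpl map in He. rewrite erase_cons, <- Hal in He. apply app_inv_head in He.
    repeat split; auto. intros [c'' [Hc'' [He'' [d [Hd ->]]]]]. apply Hn.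
    exists ((a0, z') :: c' ++ d). split; [exists pi; auto|]. split.
    + unfold ctrace. simpl map. rewrite erase_cons, <- Hal. f_equal. apply He''.
    + exists d; split; auto.
  - intros [-> [Hp [Hc [He Hn]]]]. split; [exists pi; auto|]. split.
    + unfold ctrace. simpl map. rewrite erase_cons, <- Hal. f_equal. apply He.
    + intros [c2 [Hc2 [He2 [d [Hd E2]]]]]. apply Hn. simpl in E2. subst c2.
      destruct Hc2 as [pi2 [E3 [_ Hc2]]]. exists (c' ++ d). split; auto. split.
      * unfold ctrace in He2. simpl map in He2. rewrite erase_cons, <- Hal in He2.
        apply app_inv_head in He2. apply He2.
      * exists d; auto.
Qed.

Lemma Cw_nil_none z al : rtr z = None -> (Cw rtr z al [] <-> al = []).
Proof.
  intros E. unfold Cw. split; [intros [_ [H _]]; auto|].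
  intros ->. split; [simpl; auto|]. split; [reflexivity|].
  intros [c' [Hc [_ [d [Hd ->]]]]]. destruct d as [|[a z'] d]; [congruence|].
  destruct Hc as [pi [E' _]]. congruence.
Qed.

Lemma Cw_nil_vis z b pi al : rtr z = Some (Some b, pi) -> (Cw rtr z al [] <-> al = []).
Proof.
  intros E. unfold Cw. split; [intros [_ [H _]]; auto|].
  intros ->. split; [simpl; auto|]. split; [reflexivity|].
  intros [c' [Hc [He [d [Hd ->]]]]]. destruct d as [|[a z'] d]; [congruence|].
  destruct Hc as [pi' [E' _]]. rewrite E in E'. injection E' as <- _.
  simpl in He. discriminate.
Qed.

Lemma Cw_nil_tau z pi al : rtr z = Some (None, pi) -> ~ Cw rtr z al [].
Proof.
  intros E [_ [He Hn]]. destruct (dist_pos pi (rtr_dist _ _ _ E)) as [z' Hz'].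
  apply Hn. exists [(None, z')]. split; [exists pi; simpl; auto|]. split; [simpl in *; auto|].
  exists [(None, z')]; split; [congruence|auto].
Qed.

Lemma Mx_cons_iff z a0 pi al be a1 z' c' : rtr z = Some (a0, pi) -> erase [a0] ++ be = al ->
  (Mx z al ((a1, z') :: c') <-> a1 = a0 /\ 0 < pi z' /\ Mx z' be c').
Proof.
  intros E Hal. unfold Mx, is_max_comp. split.
  - intros [[[pi1 [E1 [Hp Hc]]] Hn] He]. rewrite E in E1. injection E1 as <- <-.
    unfold ctrace in He. simpl map in He. rewrite erase_cons, <- Hal in He. apply app_inv_head in He.
    repeat split; auto. intros [c'' [Hc'' [d [Hd ->]]]]. apply Hn.
    exists ((a0, z') :: c' ++ d). split; [exists pi; auto|].
    exists d; split; auto.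
  - intros [-> [Hp [[Hc Hn] He]]]. split; [split; [exists pi; auto|]|].
    + intros [c2 [Hc2 [d [Hd E2]]]]. apply Hn. simpl in E2. subst c2.
      destruct Hc2 as [pi2 [E3 [_ Hc2]]]. exists (c' ++ d). split; auto.
      exists d; auto.
    + unfold ctrace. simpl map. rewrite erase_cons, <- Hal. f_equal. apply He.
Qed.

Lemma Mx_nil_none z al : rtr z = None -> (Mx z al [] <-> al = []).
Proof.
  intros E. unfold Mx, is_max_comp. split; [intros [_ H]; auto|].
  intros ->. split; [|reflexivity]. split; [simpl; auto|].
  intros [c' [Hc [d [Hd ->]]]]. destruct d as [|[a z'] d]; [congruence|].
  destruct Hc as [pi [E' _]]. congruence.
Qed.

Lemma Mx_nil_some z a pi al : rtr z = Some (a, pi) -> ~ Mx z al [].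
Proof.
  intros E [[_ Hn] _]. destruct (dist_pos pi (rtr_dist _ _ _ E)) as [z' Hz'].
  apply Hn. exists [(a, z')]. split; [exists pi; simpl; auto|].
  exists [(a, z')]; split; [congruence|auto].
Qed.

Lemma Cw_comp z al c : Cw rtr z al c -> is_comp rtr z c.
Proof. intros [H _]; auto. Qed.
Lemma Mx_comp z al c : Mx z al c -> is_comp rtr z c.
Proof. intros [[H _] _]; auto. Qed.

Lemma W_none_nil z : rtr z = None -> Wz z [] = 1.
Proof.
  intros E. unfold Wz, PrSet. rewrite (fsum_single _ _ []); auto.
  intros [|[a z'] c]; split; try congruence.
  - intros _; apply Cw_nil_none; auto.
  - intros [[pi [E' _]] _]. congruence.
Qed.

Lemma W_none_cons z a al : rtr z = None -> Wz z (a :: al) = 0.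
Proof.
  intros E. unfold Wz, PrSet. apply fsum_empty. intros [|[a1 z'] c].
  - rewrite Cw_nil_none; auto. discriminate.
  - intros [[pi [E' _]] _]. congruence.
Qed.

Lemma W_tau z pi L al : Acc stepR z -> rtr z = Some (None, pi) -> is_supp pi L ->
  Wz z al = lsum (fun z' => pi z' * Wz z' al) L.
Proof.
  intros Hacc E HL. unfold Wz, PrSet.
  apply (fsum_decomp z None pi None L (fun z' => Cw rtr z' al)); auto.
  - intros; eapply Cw_comp; eauto.
  - intros [|[a1 z'] c].
    + split; [intros H; exfalso; eapply Cw_nil_tau; eauto|intros [z' [c' [H _]]]; discriminate].
    + rewrite (Cw_cons_iff z None pi al al); auto. split.
      * intros [-> [Hp Hc]]. exists z', c. auto.
      * intros [z'' [c' [Eq [Hp Hc]]]]. injection Eq as -> -> ->. auto.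
Qed.

Lemma W_vis_nil z b pi : rtr z = Some (Some b, pi) -> Wz z [] = 1.
Proof.
  intros E. unfold Wz, PrSet. rewrite (fsum_single _ _ []); auto.
  intros [|[a z'] c]; split; try congruence.
  - intros _; eapply Cw_nil_vis; eauto.
  - intros H. destruct (comp_cons_gen _ _ _ _ _ (proj1 H) (proj1 (proj2 H))) as [pi' [E' [be [Hb _]]]].
    rewrite E in E'. injection E' as <- _. discriminate.
Qed.

Lemma W_vis_eq z b pi L al : Acc stepR z -> rtr z = Some (Some b, pi) -> is_supp pi L ->
  Wz z (b :: al) = lsum (fun z' => pi z' * Wz z' al) L.
Proof.
  intros Hacc E HL. unfold Wz, PrSet.
  apply (fsum_decomp z (Some b) pi (Some b) L (fun z' => Cw rtr z' al)); auto.
  - intros; eapply Cw_comp; eauto.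
  - intros [|[a1 z'] c].
    + rewrite (Cw_nil_vis z b pi); auto. split; [discriminate|intros [z' [c' [H _]]]; discriminate].
    + rewrite (Cw_cons_iff z (Some b) pi (b :: al) al); auto. split.
      * intros [-> [Hp Hc]]. exists z', c. auto.
      * intros [z'' [c' [Eq [Hp Hc]]]]. injection Eq as -> -> ->. auto.
Qed.

Lemma W_vis_neq z b pi a al : rtr z = Some (Some b, pi) -> a <> b -> Wz z (a :: al) = 0.
Proof.
  intros E Hne. unfold Wz, PrSet. apply fsum_empty. intros [|[a1 z'] c].
  - rewrite (Cw_nil_vis z b pi); auto. discriminate.
  - intros H. destruct (comp_cons_gen _ _ _ _ _ (proj1 H) (proj1 (proj2 H))) as [pi' [E' [be [Hb _]]]].
    rewrite E in E'. injection E' as <- _. simpl in Hb. injection Hb; intros; congruence.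
Qed.

Lemma Q_none_nil z : rtr z = None -> Qz z [] = 1.
Proof.
  intros E. unfold Qz. rewrite (fsum_single _ _ []); auto.
  intros [|[a z'] c]; split; try congruence.
  - intros _; apply Mx_nil_none; auto.
  - intros [[[pi [E' _]] _] _]. congruence.
Qed.

Lemma Q_none_cons z a al : rtr z = None -> Qz z (a :: al) = 0.
Proof.
  intros E. unfold Qz. apply fsum_empty. intros [|[a1 z'] c].
  - rewrite Mx_nil_none; auto. discriminate.
  - intros [[[pi [E' _]] _] _]. congruence.
Qed.

Lemma Q_tau z pi L al : Acc stepR z -> rtr z = Some (None, pi) -> is_supp pi L ->
  Qz z al = lsum (fun z' => pi z' * Qz z' al) L.
Proof.
  intros Hacc E HL. unfold Qz.
  apply (fsum_decomp z None pi None L (fun z' => Mx z' al)); auto.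
  - intros; eapply Mx_comp; eauto.
  - intros [|[a1 z'] c].
    + split; [intros H; exfalso; eapply Mx_nil_some; eauto|intros [z' [c' [H _]]]; discriminate].
    + rewrite (Mx_cons_iff z None pi al al); auto. split.
      * intros [-> [Hp Hc]]. exists z', c. auto.
      * intros [z'' [c' [Eq [Hp Hc]]]]. injection Eq as -> -> ->. auto.
Qed.

Lemma Q_vis_nil z b pi : rtr z = Some (Some b, pi) -> Qz z [] = 0.
Proof.
  intros E. unfold Qz. apply fsum_empty. intros [|[a z'] c].
  - eapply Mx_nil_some; eauto.
  - intros H. destruct (comp_cons_gen _ _ _ _ _ (Mx_comp _ _ _ H) (proj2 H)) as [pi' [E' [be [Hb _]]]].
    rewrite E in E'. injection E' as <- _. discriminate.
Qed.

Lemma Q_vis_eq z b pi L al : Acc stepR z -> rtr z = Some (Some b, pi) -> is_supp pi L ->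
  Qz z (b :: al) = lsum (fun z' => pi z' * Qz z' al) L.
Proof.
  intros Hacc E HL. unfold Qz.
  apply (fsum_decomp z (Some b) pi (Some b) L (fun z' => Mx z' al)); auto.
  - intros; eapply Mx_comp; eauto.
  - intros [|[a1 z'] c].
    + split; [intros H; exfalso; eapply Mx_nil_some; eauto|intros [z' [c' [H _]]]; discriminate].
    + rewrite (Mx_cons_iff z (Some b) pi (b :: al) al); auto. split.
      * intros [-> [Hp Hc]]. exists z', c. auto.
      * intros [z'' [c' [Eq [Hp Hc]]]]. injection Eq as -> -> ->. auto.
Qed.

Lemma Q_vis_neq z b pi a al : rtr z = Some (Some b, pi) -> a <> b -> Qz z (a :: al) = 0.
Proof.
  intros E Hne. unfold Qz. apply fsum_empty. intros [|[a1 z'] c].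
  - eapply Mx_nil_some; eauto.
  - intros H. destruct (comp_cons_gen _ _ _ _ _ (Mx_comp _ _ _ H) (proj2 H)) as [pi' [E' [be [Hb _]]]].
    rewrite E in E'. injection E' as <- _. simpl in Hb. injection Hb; intros; congruence.
Qed.


Definition goodL (LA : list A) z := forall z'' b pi, reach (res_trans rtr) z z'' ->
  rtr z'' = Some (Some b, pi) -> In b LA.

Lemma gather_nat (P : nat -> Z -> Prop) (L : list Z) :
  (forall B B' z, P B z -> (B <= B')%nat -> P B' z) ->
  (forall z, In z L -> exists B, P B z) -> exists B, forall z, In z L -> P B z.
Proof.
  intros Hm. induction L as [|x L IH]; intros H.
  - exists O. intros z [].
  - destruct IH as [B HB]; [intros; apply H; simpl; auto|].
    destruct (H x (or_introl eq_refl)) as [B0 H0].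
    exists (Nat.max B B0). intros z [<-|Hz].
    + eapply Hm; eauto. apply Nat.le_max_r.
    + eapply Hm; eauto. apply Nat.le_max_l.
Qed.

Lemma gather_list (L : list Z) :
  (forall z, In z L -> exists LA, goodL LA z) -> exists LA, forall z, In z L -> goodL LA z.
Proof.
  induction L as [|x L IH]; intros H.
  - exists []. intros z [].
  - destruct IH as [B HB]; [intros; apply H; simpl; auto|].
    destruct (H x (or_introl eq_refl)) as [B0 H0].
    exists (B ++ B0). intros z [<-|Hz] z'' b pi Hr E; apply in_or_app.
    + right. eapply H0; eauto.
    + left. eapply HB; eauto.
Qed.


Lemma W_nil1 z : Acc stepR z -> Wz z [] = 1.
Proof.
  induction 1 as [z Hacc IH].
  destruct (rtr z) as [[[b|] pi]|] eqn:E.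
  - eapply W_vis_nil; eauto.
  - destruct (supp_exists pi (rtr_dist _ _ _ E)) as [L HL].
    rewrite (W_tau z pi L); auto. 2:{ constructor; auto. }
    rewrite <- (supp_sum1 pi L (rtr_dist _ _ _ E) HL). apply lsum_ext. intros z' Hz.
    rewrite IH; [lra|]. exists None, pi; split; auto. apply HL; auto.
  - apply W_none_nil; auto.
Qed.

Lemma W_bound z : Acc stepR z -> exists B, forall al, (B < length al)%nat -> Wz z al = 0.
Proof.
  induction 1 as [z Hacc IH].
  assert (Hz : Acc stepR z) by (constructor; auto).
  destruct (rtr z) as [[a pi]|] eqn:E.
  - destruct (supp_exists pi (rtr_dist _ _ _ E)) as [L HL].
    destruct (gather_nat (fun B z' => forall al, (B < length al)%nat -> Wz z' al = 0) L) as [B HB].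
    { intros B B' z' H Hle al Hl. apply H. lia. }
    { intros z' Hz'. apply IH. exists a, pi; split; auto. apply HL; auto. }
    exists (Datatypes.S B). intros al Hl. destruct a as [b|].
    + destruct al as [|a' al]; simpl in Hl; [lia|].
      destruct (classic (a' = b)) as [->|Hne].
      * rewrite (W_vis_eq z b pi L al); auto. rewrite <- (lsum_zero L). apply lsum_ext.
        intros z' Hz'. rewrite HB; auto; try lra; lia.
      * eapply W_vis_neq; eauto.
    + rewrite (W_tau z pi L al); auto. rewrite <- (lsum_zero L). apply lsum_ext.
      intros z' Hz'. rewrite HB; auto; try lra; lia.
  - exists O. intros [|a al] Hl; simpl in Hl; [lia|]. apply W_none_cons; auto.
Qed.

Lemma goodL_exists z : Acc stepR z -> exists LA, goodL LA z.
Proof.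
  induction 1 as [z Hacc IH].
  destruct (rtr z) as [[a pi]|] eqn:E.
  - destruct (supp_exists pi (rtr_dist _ _ _ E)) as [L HL].
    destruct (gather_list L) as [LA HLA].
    { intros z' Hz'. apply IH. exists a, pi; split; auto. apply HL; auto. }
    exists (match a with Some b => b :: LA | None => LA end).
    intros z'' b pi'' Hr E''. inversion Hr as [s0|s0 a1 pi1 s' s''0 Ht Hp Hr']; subst.
    + rewrite E in E''. injection E'' as -> _. simpl; auto.
    + unfold res_trans in Ht. rewrite E in Ht. injection Ht as <- <-.
      assert (In b LA) by (eapply (HLA s'); eauto; apply HL; auto).
      destruct a; simpl; auto.
  - exists []. intros z'' b pi'' Hr E''. inversion Hr; subst; [congruence|].
    unfold res_trans in *. congruence.
Qed.

Lemma goodL_mono LA LA' z : goodL LA z -> (forall a, In a LA -> In a LA') -> goodL LA' z.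
Proof. intros H Hs z'' b pi Hr E. apply Hs. eapply H; eauto. Qed.

Lemma alg_lemma (pi : Z -> R) (q : Z -> R) (w : Z -> A -> R) (L : list Z) (LA : list A) :
  lsum (fun z' => pi z' * (q z' + lsum (fun a => w z' a) LA)) L =
  lsum (fun z' => pi z' * q z') L + lsum (fun a => lsum (fun z' => pi z' * w z' a) L) LA.
Proof.
  rewrite <- lsum_exch, <- lsum_plus. apply lsum_ext. intros z' _.
  rewrite (lsum_scal (fun a => w z' a) (pi z') LA). lra.
Qed.

Lemma identity LA z : NoDup LA -> Acc stepR z -> goodL LA z ->
  forall al, Wz z al = Qz z al + lsum (fun a => Wz z (al ++ [a])) LA.
Proof.
  intros NA Hacc. induction Hacc as [z Hacc IH]. intros Hg al.
  assert (Hz : Acc stepR z) by (constructor; auto).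
  destruct (rtr z) as [[a pi]|] eqn:E.
  - destruct (supp_exists pi (rtr_dist _ _ _ E)) as [L HL].
    assert (IH' : forall z', In z' L -> forall al, Wz z' al = Qz z' al + lsum (fun a => Wz z' (al ++ [a])) LA).
    { intros z' Hz'. assert (0 < pi z') by (apply HL; auto). apply IH.
      - exists a, pi; split; auto.
      - intros z'' b pi'' Hr E''. eapply Hg; eauto. eapply reach_step; eauto. }
    destruct a as [b|].
    + destruct al as [|a' al].
      * rewrite (W_vis_nil z b pi), (Q_vis_nil z b pi); auto.
        rewrite (lsum_ext _ (fun a => if excluded_middle_informative (b = a) then 1 else 0)).
        -- rewrite lsum_ind_eq; auto. destruct (excluded_middle_informative (In b LA)); [lra|].
           exfalso; apply n. eapply (Hg z); eauto. constructor.
        -- intros a Ha. simpl. destruct (excluded_middle_informative (b = a)) as [<-|Hne].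
           ++ rewrite (W_vis_eq z b pi L []); auto. rewrite <- (supp_sum1 pi L (rtr_dist _ _ _ E) HL).
              apply lsum_ext. intros z' Hz'. rewrite W_nil1; [lra|].
              apply (Acc_inv Hz). exists (Some b), pi; split; auto. apply HL; auto.
           ++ eapply W_vis_neq; eauto.
      * destruct (classic (a' = b)) as [->|Hne].
        -- rewrite (W_vis_eq z b pi L), (Q_vis_eq z b pi L); auto.
           rewrite (lsum_ext _ (fun z' => pi z' * (Qz z' al + lsum (fun a => Wz z' (al ++ [a])) LA))).
           2:{ intros z' Hz'. rewrite <- IH'; auto. }
           rewrite alg_lemma. f_equal. apply lsum_ext. intros x _. simpl.
           rewrite (W_vis_eq z b pi L); auto.
        -- rewrite (W_vis_neq z b pi), (Q_vis_neq z b pi); auto.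
           rewrite (lsum_ext _ (fun _ => 0)). { rewrite lsum_zero; lra. }
           intros x _. simpl. rewrite (W_vis_neq z b pi); auto.
    + rewrite (W_tau z pi L), (Q_tau z pi L); auto.
      rewrite (lsum_ext _ (fun z' => pi z' * (Qz z' al + lsum (fun a => Wz z' (al ++ [a])) LA))).
      2:{ intros z' Hz'. rewrite <- IH'; auto. }
      rewrite alg_lemma. f_equal. apply lsum_ext. intros x _.
      rewrite (W_tau z pi L); auto.
  - destruct al as [|a' al].
    + rewrite W_none_nil, Q_none_nil; auto.
      rewrite (lsum_ext _ (fun _ => 0)). { rewrite lsum_zero; lra. }
      intros x _. simpl. rewrite W_none_cons; auto.
    + rewrite W_none_cons, Q_none_cons; auto.
      rewrite (lsum_ext _ (fun _ => 0)). { rewrite lsum_zero; lra. }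
      intros x _. simpl. rewrite W_none_cons; auto.
Qed.

End Res.

Section Main.
Context {A Z : Type} (rtr : Z -> option (Atau A * (Z -> R))) (Hwf : PTS_wf (res_trans rtr)).

Lemma acc_of_finite {S : Type} (trans : S -> Atau A -> (S -> R) -> Prop) (corr : Z -> S) z0 :
  (forall z a pi, res_trans rtr z a pi -> exists pi', trans (corr z) a pi' /\ forall z', pi z' = pi' (corr z')) ->
  finite_proc trans (corr z0) -> Acc (stepR rtr) z0.
Proof.
  intros Hm Hf. apply NNPP. intros Hn.
  assert (Hnext : forall z : {z | ~ Acc (stepR rtr) z}, exists z' : {z | ~ Acc (stepR rtr) z},
             stepR rtr (proj1_sig z') (proj1_sig z)).
  { intros [z Hz]. apply NNPP; intro H. apply Hz. constructor. intros y Hy. apply NNPP; intro Hy'.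
    apply H. exists (exist _ y Hy'). exact Hy. }
  set (nx := fun z => proj1_sig (constructive_indefinite_description _ (Hnext z))).
  assert (Hnx : forall z, stepR rtr (proj1_sig (nx z)) (proj1_sig z)).
  { intro z; unfold nx; destruct constructive_indefinite_description; auto. }
  set (sq := fix sq n := match n with O => exist _ z0 Hn | Datatypes.S n => nx (sq n) end).
  assert (Hp : forall n, exists p : Atau A * (S -> R),
    trans (corr (proj1_sig (sq n))) (fst p) (snd p) /\ 0 < snd p (corr (proj1_sig (sq (Datatypes.S n))))).
  { intros n. destruct (Hnx (sq n)) as [a [pi [E Hpos]]]. destruct (Hm _ _ _ E) as [pi' [Ht Heq]].
    exists (a, pi'). simpl. split; auto. rewrite <- Heq. exact Hpos. }
  apply Hf. exists (fun n => corr (proj1_sig (sq n))),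
    (fun n => fst (proj1_sig (constructive_indefinite_description _ (Hp n)))),
    (fun n => snd (proj1_sig (constructive_indefinite_description _ (Hp n)))).
  split; [reflexivity|]. intros n. destruct (constructive_indefinite_description _ (Hp n)) as [p Hp']. simpl. exact Hp'.
Qed.

Fixpoint untr (f : tform A) : list (Atau A) :=
  match f with TTop => [] | TDia a f' => a :: untr f' end.

Lemma tracing_untr f : tracing (untr f) = f.
Proof. induction f; simpl; congruence. Qed.
Lemma untr_tracing l : untr (tracing l) = l.
Proof. induction l; simpl; congruence. Qed.

Lemma tf_equiv_iff g f : tf_equiv g f <-> erase (untr g) = erase (untr f).
Proof.
  split.
  - intros [al [be [-> [-> H]]]]. rewrite !untr_tracing. exact H.
  - intros H. exists (untr g), (untr f). rewrite !tracing_untr. auto.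
Qed.

Lemma class_mimic z f : Acc (stepR rtr) z -> class_pr (mimic rtr z) f = Qz rtr z (erase (untr f)).
Proof.
  intros Hacc. unfold class_pr.
  assert (cM : cov (is_max_comp rtr z)).
  { apply (cov_sub _ (is_comp rtr z)); [apply comps_cov; auto|]. intros c [H _]; auto. }
  transitivity (fsum (fun g => tf_equiv g f /\ mimic rtr z g <> 0)
     (fun g => fsum (fun c => is_max_comp rtr z c /\ tracing (ctrace c) = g) (comp_pr rtr z))).
  { reflexivity. }
  rewrite fubini; auto.
  - unfold Qz, Mx. apply fsum_ext; [|auto]. intros c. rewrite tf_equiv_iff, untr_tracing. split.
    + intros [H1 [H2 _]]; auto.
    + intros [H1 H2]. split; auto. split; auto.
      assert (0 < comp_pr rtr z c) by (apply comp_pr_pos; destruct H1; auto).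
      assert (comp_pr rtr z c <= mimic rtr z (tracing (ctrace c))).
      { unfold mimic, PrSet. apply fsum_ge.
        - apply (cov_sub _ _ cM). intros x [Hx _]; auto.
        - intros x [[Hx _] _]. left; apply comp_pr_pos; auto.
        - auto. }
      lra.
  - destruct cM as [lM HM]. exists (map (fun c => tracing (ctrace c)) lM).
    intros g [_ Hg]. apply NNPP. intros Hn. apply Hg. unfold mimic, PrSet. apply fsum_empty.
    intros c [Hc Eg]. apply Hn. rewrite <- Eg. apply (in_map (fun c => tracing (ctrace c))); auto.
Qed.

End Main.

Lemma erase_some {A : Type} (l : list A) : erase (map Some l) = l.
Proof. induction l; simpl; congruence. Qed.

Theorem theorem12 (A S : Type) (trans : S -> Atau A -> (S -> R) -> Prop)
  (Hwf : PTS_wf trans) (s t : S)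
  (Hs_if : image_finite_proc trans s) (Hs_fin : finite_proc trans s)
  (Ht_if : image_finite_proc trans t) (Ht_fin : finite_proc trans t)
  (Zs : Type) (rtr_s : Zs -> option (Atau A * (Zs -> R))) (corr_s : Zs -> S) (zs : Zs)
  (Hres_s : is_resolution trans s rtr_s corr_s zs)
  (Zt : Type) (rtr_t : Zt -> option (Atau A * (Zt -> R))) (corr_t : Zt -> S) (zt : Zt)
  (Hres_t : is_resolution trans t rtr_t corr_t zt) :
  tdf_equiv (mimic rtr_s zs) (mimic rtr_t zt) <->
  (forall alpha : list A, PrSet rtr_s zs (Cw rtr_s zs alpha) = PrSet rtr_t zt (Cw rtr_t zt alpha)).
Proof.
  destruct Hres_s as [Wfs [Cs [_ [_ Ms]]]]. destruct Hres_t as [Wft [Ct [_ [_ Mt]]]].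
  assert (As : Acc (stepR rtr_s) zs) by (apply (acc_of_finite rtr_s trans corr_s); [exact Ms|rewrite Cs; exact Hs_fin]).
  assert (At : Acc (stepR rtr_t) zt) by (apply (acc_of_finite rtr_t trans corr_t); [exact Mt|rewrite Ct; exact Ht_fin]).
  destruct (goodL_exists rtr_s Wfs zs As) as [Ls Gs].
  destruct (goodL_exists rtr_t Wft zt At) as [Lt Gt].
  destruct (cov_fin (fun a => In a (Ls ++ Lt))) as [LA [NA HA]]. { exists (Ls ++ Lt); auto. }
  assert (Gs' : goodL rtr_s LA zs).
  { apply (goodL_mono rtr_s Ls); auto. intros a Ha; apply HA, in_or_app; auto. }
  assert (Gt' : goodL rtr_t LA zt).
  { apply (goodL_mono rtr_t Lt); auto. intros a Ha; apply HA, in_or_app; auto. }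
  pose proof (identity rtr_s Wfs LA zs NA As Gs') as Is.
  pose proof (identity rtr_t Wft LA zt NA At Gt') as It.
  change (forall al, Wz rtr_s zs al = Qz rtr_s zs al + lsum (fun a => Wz rtr_s zs (al ++ [a])) LA) in Is.
  unfold tdf_equiv. split.
  - intros H.
    assert (HQ : forall g, Qz rtr_s zs g = Qz rtr_t zt g).
    { intros g. specialize (H (tracing (map Some g))).
      rewrite (class_mimic rtr_s Wfs zs), (class_mimic rtr_t Wft zt) in H; auto.
      rewrite untr_tracing, erase_some in H. exact H. }
    destruct (W_bound rtr_s Wfs zs As) as [Bs HBs].
    destruct (W_bound rtr_t Wft zt At) as [Bt HBt].
    assert (K : forall n al, (Datatypes.S (Bs + Bt) <= length al + n)%nat ->
               Wz rtr_s zs al = Wz rtr_t zt al).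
    { induction n as [|n IHn]; intros al Hl.
      - rewrite HBs, HBt; auto; lia.
      - rewrite Is, It, HQ. f_equal. apply lsum_ext. intros a _. apply IHn.
        rewrite length_app. simpl. lia. }
    intros alpha. apply (K (Datatypes.S (Bs + Bt))). lia.
  - intros H f. rewrite (class_mimic rtr_s Wfs zs), (class_mimic rtr_t Wft zt); auto.
    set (g := erase (untr f)).
    assert (E1 := Is g). assert (E2 := It g).
    assert (E3 : lsum (fun a => Wz rtr_s zs (g ++ [a])) LA = lsum (fun a => Wz rtr_t zt (g ++ [a])) LA).
    { apply lsum_ext. intros a _. apply H. }
    unfold Wz in *. rewrite H in E1. lra.
Qed.
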